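(* Let $G$ be a compact abelian group which is a torsion group (every element has finite order), and let $K \subset \widehat{G}$. Then $K$ is strictly positive definite if and only if $K$ is ubiquitous.
   Context: A trigonometric polynomial on $\widehat{G}$ is a function of the form $\gamma \mapsto \sum_{i=1}^n c_i \gamma(x_i)$ with $x_i \in G$, $c_i \in \mathbb{C}$. A subset $K \subset \widehat{G}$ is strictly positive definite if the only trigonometric polynomial on $\widehat{G}$ vanishing at every point of $K$ is the identically zero function. A subset $K \subset \widehat{G}$ is ubiquitous if for every subgroup $H$ of $\widehat{G}$ of finite index and every $\gamma \in \widehat{G}$ the coset $\gamma H$ meets $K$. *)

(* Defs.v *)
From Stdlib Require Import Reals List.
Open Scope R_scope.

Definition C := (R * R)%type.
Definition C0 : C := (0, 0).
Definition C1 : C := (1, 0).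
Definition Cadd (z w : C) : C := (fst z + fst w, snd z + snd w).
Definition Cmul (z w : C) : C :=
  (fst z * fst w - snd z * snd w, fst z * snd w + snd z * fst w).
Definition Cconj (z : C) : C := (fst z, - snd z).
Definition Cnorm2 (z : C) : R := fst z * fst z + snd z * snd z.

Definition C_open (U : C -> Prop) : Prop :=
  forall z, U z -> exists eps, 0 < eps /\
    forall w, Cnorm2 (fst w - fst z, snd w - snd z) < eps -> U w.

Record CompactAbGroup := {
  carrier :> Type;
  gadd : carrier -> carrier -> carrier;
  gzero : carrier;
  gopp : carrier -> carrier;
  gaddA : forall x y z, gadd x (gadd y z) = gadd (gadd x y) z;
  gaddC : forall x y, gadd x y = gadd y x;
  gadd0 : forall x, gadd x gzero = x;
  gaddN : forall x, gadd x (gopp x) = gzero;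
  gopen : (carrier -> Prop) -> Prop;
  gopen_full : gopen (fun _ => True);
  gopen_inter : forall U V, gopen U -> gopen V -> gopen (fun x => U x /\ V x);
  gopen_union : forall (I : Type) (U : I -> carrier -> Prop),
      (forall i, gopen (U i)) -> gopen (fun x => exists i, U i x);
  ghausdorff : forall x y, x <> y -> exists U V, gopen U /\ gopen V /\
      U x /\ V y /\ forall z, ~ (U z /\ V z);
  gcompact : forall (I : Type) (U : I -> carrier -> Prop),
      (forall i, gopen (U i)) -> (forall x, exists i, U i x) ->
      exists l : list I, forall x, exists i, In i l /\ U i x;
  gadd_cont : forall x y W, gopen W -> W (gadd x y) ->
      exists U V, gopen U /\ gopen V /\ U x /\ V y /\
        forall u v, U u -> V v -> W (gadd u v);
  gopp_cont : forall W, gopen W -> gopen (fun x => W (gopp x))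
}.

Arguments gadd {_}.
Arguments gzero {_}.

Fixpoint gnmul {G : CompactAbGroup} (n : nat) (x : G) : G :=
  match n with O => gzero | S m => gadd x (gnmul m x) end.

Definition torsion (G : CompactAbGroup) : Prop :=
  forall x : G, exists n : nat, (n > 0)%nat /\ gnmul n x = gzero.

Record character (G : CompactAbGroup) := {
  chi :> G -> C;
  chi_hom : forall x y, chi (gadd x y) = Cmul (chi x) (chi y);
  chi_unit : forall x, Cnorm2 (chi x) = 1;
  chi_cont : forall V, C_open V -> gopen G (fun x => V (chi x))
}.

(** Group law of the dual, as relations (pointwise product / conjugate). *)
Definition dual_is_one {G} (e : character G) := forall x, e x = C1.
Definition dual_is_prod {G} (a b c : character G) :=
  forall x, c x = Cmul (a x) (b x).
Definition dual_is_inv {G} (a b : character G) :=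
  forall x, b x = Cconj (a x).

Definition dual_subgroup {G} (H : character G -> Prop) : Prop :=
  (forall e, dual_is_one e -> H e) /\
  (forall a b c, H a -> H b -> dual_is_prod a b c -> H c) /\
  (forall a b, H a -> dual_is_inv a b -> H b).

Definition in_coset {G} (delta : character G) (H : character G -> Prop)
    (gamma : character G) : Prop :=
  exists eta, H eta /\ dual_is_prod delta eta gamma.

Definition finite_index {G} (H : character G -> Prop) : Prop :=
  exists l : list (character G), forall gamma,
    exists delta, In delta l /\ in_coset delta H gamma.

(** Trigonometric polynomial on the dual: gamma |-> sum c_i gamma(x_i). *)
Definition trig_poly {G : CompactAbGroup} (p : list (G * C))
    (gamma : character G) : C :=
  fold_right (fun xc acc => Cadd (Cmul (snd xc) (gamma (fst xc))) acc) C0 p.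

Definition strictly_positive_definite {G : CompactAbGroup}
    (K : character G -> Prop) : Prop :=
  forall p : list (G * C),
    (forall gamma, K gamma -> trig_poly p gamma = C0) ->
    forall gamma, trig_poly p gamma = C0.

Definition ubiquitous {G : CompactAbGroup} (K : character G -> Prop) : Prop :=
  forall H : character G -> Prop, dual_subgroup H -> finite_index H ->
    forall gamma : character G, exists k, K k /\ in_coset gamma H k.

(* Main.v *)
Require Import Defs.
From Stdlib Require Import Reals List Lra Lia Psatz ZArith Arith Classical ClassicalEpsilon FunctionalExtensionality PropExtensionality.
Open Scope R_scope.
Import Defs.

Lemma Cmul_comm z w : Cmul z w = Cmul w z.
Proof. destruct z, w; unfold Cmul; simpl; f_equal; ring. Qed.
Lemma Cmul_assoc a b c : Cmul a (Cmul b c) = Cmul (Cmul a b) c.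
Proof. destruct a, b, c; unfold Cmul; simpl; f_equal; ring. Qed.
Lemma Cmul_1_l z : Cmul C1 z = z.
Proof. destruct z; unfold Cmul, C1; simpl; f_equal; ring. Qed.
Lemma Cmul_1_r z : Cmul z C1 = z.
Proof. rewrite Cmul_comm; apply Cmul_1_l. Qed.
Lemma Cmul_0_l z : Cmul C0 z = C0.
Proof. destruct z; unfold Cmul, C0; simpl; f_equal; ring. Qed.
Lemma Cnorm2_mul a b : Cnorm2 (Cmul a b) = Cnorm2 a * Cnorm2 b.
Proof. destruct a, b; unfold Cmul, Cnorm2; simpl; ring. Qed.
Lemma Cmul_conj_r z : Cnorm2 z = 1 -> Cmul z (Cconj z) = C1.
Proof. destruct z; unfold Cmul, Cconj, Cnorm2, C1; simpl; intros H; f_equal; lra. Qed.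
Lemma Cadd_0_r z : Cadd z C0 = z.
Proof. destruct z; unfold Cadd, C0; simpl; f_equal; ring. Qed.
Lemma Cadd_comm z w : Cadd z w = Cadd w z.
Proof. destruct z, w; unfold Cadd; simpl; f_equal; ring. Qed.
Lemma Cadd_assoc a b c : Cadd a (Cadd b c) = Cadd (Cadd a b) c.
Proof. destruct a, b, c; unfold Cadd; simpl; f_equal; ring. Qed.
Lemma Cmul_add_r a b c : Cmul a (Cadd b c) = Cadd (Cmul a b) (Cmul a c).
Proof. destruct a, b, c; unfold Cmul, Cadd; simpl; f_equal; ring. Qed.
Lemma Cmul_0_r z : Cmul z C0 = C0.
Proof. rewrite Cmul_comm; apply Cmul_0_l. Qed.
Lemma Cnorm2_eq0 z : Cnorm2 z = 0 -> z = C0.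
Proof. destruct z as [a b]; unfold Cnorm2, C0; simpl; intros H; f_equal; nra. Qed.
Lemma Cmul_integral a b : Cmul a b = C0 -> a <> C0 -> b = C0.
Proof.
  intros H Ha. apply Cnorm2_eq0.
  assert (Cnorm2 (Cmul a b) = 0) by (rewrite H; unfold Cnorm2, C0; simpl; ring).
  rewrite Cnorm2_mul in H0.
  assert (Cnorm2 a <> 0) by (intro E; apply Ha, Cnorm2_eq0, E).
  destruct (Rmult_integral _ _ H0); [contradiction|assumption].
Qed.

Fixpoint Cpow (z : C) (n : nat) : C :=
  match n with O => C1 | S m => Cmul z (Cpow z m) end.

Lemma Cpow_add z a b : Cpow z (a + b) = Cmul (Cpow z a) (Cpow z b).
Proof. induction a; simpl. now rewrite Cmul_1_l. rewrite IHa, Cmul_assoc; auto. Qed.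
Lemma Cpow_mul z a b : Cpow z (a * b) = Cpow (Cpow z b) a.
Proof. induction a; simpl; auto. rewrite Cpow_add, IHa; auto. Qed.
Lemma Cpow_Cmul a b n : Cpow (Cmul a b) n = Cmul (Cpow a n) (Cpow b n).
Proof.
  induction n; simpl. now rewrite Cmul_1_l. rewrite IHn.
  rewrite !Cmul_assoc. f_equal. rewrite <- !Cmul_assoc. f_equal. apply Cmul_comm.
Qed.
Lemma Cpow_C1 n : Cpow C1 n = C1.
Proof. induction n; simpl; auto. rewrite IHn; apply Cmul_1_l. Qed.
Lemma Cnorm2_pow z n : Cnorm2 z = 1 -> Cnorm2 (Cpow z n) = 1.
Proof. intros H; induction n; simpl. unfold Cnorm2, C1; simpl; ring. rewrite Cnorm2_mul, H, IHn; ring. Qed.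

Definition E (t : R) : C := (cos (2 * PI * t), sin (2 * PI * t)).

Lemma E_add a b : E (a + b) = Cmul (E a) (E b).
Proof.
  unfold E, Cmul; simpl. replace (2 * PI * (a + b)) with (2*PI*a + 2*PI*b) by ring.
  rewrite cos_plus, sin_plus. f_equal; ring.
Qed.
Lemma E_0 : E 0 = C1.
Proof. unfold E, C1. rewrite Rmult_0_r, cos_0, sin_0. reflexivity. Qed.
Lemma E_1 : E 1 = C1.
Proof. unfold E, C1. rewrite Rmult_1_r, cos_2PI, sin_2PI. reflexivity. Qed.
Lemma E_norm t : Cnorm2 (E t) = 1.
Proof. unfold E, Cnorm2; simpl. pose proof (sin2_cos2 (2*PI*t)). unfold Rsqr in H. lra. Qed.
Lemma E_INR n : E (INR n) = C1.
Proof.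
  induction n. simpl; apply E_0.
  rewrite S_INR, E_add, IHn, E_1, Cmul_1_l; auto.
Qed.
Lemma E_IZR k : E (IZR k) = C1.
Proof.
  destruct (Z_le_gt_dec 0 k).
  - rewrite <- (Z2Nat.id k l), <- INR_IZR_INZ. apply E_INR.
  - assert (H : E (IZR k + INR (Z.to_nat (- k))) = C1).
    { rewrite INR_IZR_INZ, Z2Nat.id by lia. rewrite <- plus_IZR.
      replace (k + - k)%Z with 0%Z by ring. apply E_0. }
    rewrite E_add, E_INR, Cmul_1_r in H. exact H.
Qed.
Lemma E_pow t n : Cpow (E t) n = E (INR n * t).
Proof.
  induction n; simpl Cpow. rewrite Rmult_0_l; now rewrite E_0.
  rewrite IHn, <- E_add, S_INR. f_equal; ring.
Qed.

Lemma E_one_frac r : 0 <= r < 1 -> E r = C1 -> r = 0.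
Proof.
  intros [H0 H1] HE. unfold E, C1 in HE. injection HE as Hc Hs.
  pose proof PI_RGT_0.
  destruct (sin_eq_O_2PI_0 (2*PI*r)) as [A|[A|A]]; try nra; auto.
  - rewrite A, cos_PI in Hc. lra.
Qed.

Lemma E_one_int s : E s = C1 -> exists k, s = IZR k.
Proof.
  intros H. exists (Int_part s).
  destruct (base_Int_part s) as [B1 B2].
  set (r := s - IZR (Int_part s)).
  assert (E r = C1).
  { unfold r. replace (s - IZR (Int_part s)) with (s + IZR (- Int_part s)) by (rewrite opp_IZR; ring).
    rewrite E_add, H, E_IZR, Cmul_1_l; auto. }
  assert (r = 0) by (apply E_one_frac; auto; unfold r; lra).
  unfold r in H1; lra.
Qed.

Lemma E_polar z : Cnorm2 z = 1 -> exists t, 0 <= t <= 1 /\ z = E t.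
Proof.
  destruct z as [a b]. unfold Cnorm2; simpl. intros H.
  pose proof PI_RGT_0.
  assert (Ha : -1 <= a <= 1) by nra.
  pose proof (acos_bound a) as Hb.
  pose proof (cos_acos a Ha) as Hc. pose proof (sin_acos a Ha) as Hs.
  assert (Hsq : sqrt (1 - a²) = Rabs b).
  { rewrite <- sqrt_Rsqr_abs. f_equal. unfold Rsqr; lra. }
  destruct (Rle_dec 0 b).
  - exists (acos a / (2*PI)). split. split. apply Rmult_le_pos; [lra|]. left; apply Rinv_0_lt_compat; lra.
    apply Rmult_le_reg_r with (2*PI); [lra|]. field_simplify; lra.
    unfold E. replace (2 * PI * (acos a / (2 * PI))) with (acos a) by (field; lra).
    rewrite Hc, Hs, Hsq, Rabs_right; auto; lra.
  - exists (1 - acos a / (2*PI)). split. split.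
    apply Rmult_le_reg_r with (2*PI); [lra|]. field_simplify; lra.
    assert (0 <= acos a / (2*PI)) by (apply Rmult_le_pos; [lra|]; left; apply Rinv_0_lt_compat; lra). lra.
    unfold E. replace (2 * PI * (1 - acos a / (2 * PI))) with (- acos a + 2 * INR 1 * PI) by (simpl; field; lra).
    rewrite cos_period, sin_period, cos_neg, sin_neg, Hc, Hs, Hsq, Rabs_left; [f_equal; ring|lra].
Qed.
Definition root (M j : nat) : C := E (INR j / INR M).

Lemma root_mul M a b : (M > 0)%nat -> Cmul (root M a) (root M b) = root M (a + b).
Proof.
  intros HM. unfold root. rewrite <- E_add. f_equal. rewrite plus_INR.
  assert (INR M <> 0) by (apply not_0_INR; lia). field; auto.
Qed.
Lemma root_pow M a n : (M > 0)%nat -> Cpow (root M a) n = root M (n * a).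
Proof.
  intros HM. unfold root. rewrite E_pow. f_equal. rewrite mult_INR.
  assert (INR M <> 0) by (apply not_0_INR; lia). field; auto.
Qed.
Lemma root_multiple M q : (M > 0)%nat -> root M (q * M) = C1.
Proof.
  intros HM. unfold root. rewrite mult_INR.
  assert (INR M <> 0) by (apply not_0_INR; lia).
  replace (INR q * INR M / INR M) with (INR q) by (field; auto). apply E_INR.
Qed.
Lemma root_mod M j : (M > 0)%nat -> root M j = root M (j mod M).
Proof.
  intros HM. rewrite (Nat.div_mod_eq j M) at 1.
  rewrite <- root_mul by auto. rewrite Nat.mul_comm, root_multiple, Cmul_1_l; auto.
Qed.
Lemma root_one_lt M j : (M > 0)%nat -> (j < M)%nat -> root M j = C1 -> j = 0%nat.
Proof.
  intros HM Hj H. unfold root in H.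
  assert (INR M > 0) by (apply lt_0_INR; lia).
  assert (INR j < INR M) by (apply lt_INR; auto).
  pose proof (pos_INR j).
  apply E_one_frac in H.
  - assert (INR j = 0). { apply Rmult_eq_reg_r with (/ INR M). rewrite Rmult_0_l. exact H.
      apply Rinv_neq_0_compat; lra. }
    apply INR_eq. simpl; auto.
  - split. apply Rmult_le_pos; auto. left; apply Rinv_0_lt_compat; lra.
    apply Rmult_lt_reg_r with (INR M); auto. field_simplify; lra.
Qed.
Lemma root_one_iff M j : (M > 0)%nat -> root M j = C1 <-> (j mod M = 0)%nat.
Proof.
  intros HM. rewrite root_mod by auto. split.
  - intros H. apply root_one_lt in H; auto. apply Nat.mod_upper_bound; lia.
  - intros ->. unfold root. simpl. unfold Rdiv. rewrite Rmult_0_l. apply E_0.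
Qed.
Lemma root_norm M j : Cnorm2 (root M j) = 1.
Proof. apply E_norm. Qed.

Lemma root_repr M z : (M > 0)%nat -> Cnorm2 z = 1 -> Cpow z M = C1 ->
  exists j, (j < M)%nat /\ z = root M j.
Proof.
  intros HM Hn Hp. destruct (E_polar z Hn) as [t [Ht ->]].
  rewrite E_pow in Hp. apply E_one_int in Hp. destruct Hp as [k Hk].
  assert (INR M > 0) by (apply lt_0_INR; lia).
  assert (0 <= IZR k <= INR M) by (rewrite <- Hk; split; nra).
  assert (Hk0 : (0 <= k)%Z) by (apply le_IZR; lra).
  assert (HkM : (k <= Z.of_nat M)%Z) by (apply le_IZR; rewrite <- INR_IZR_INZ; lra).
  destruct (Z.eq_dec k (Z.of_nat M)) as [e|ne].
  - exists 0%nat. split; auto. subst k. rewrite <- INR_IZR_INZ in Hk.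
    assert (t = 1) by (apply Rmult_eq_reg_l with (INR M); lra). subst t.
    rewrite E_1. unfold root; simpl. unfold Rdiv; rewrite Rmult_0_l, E_0; auto.
  - exists (Z.to_nat k). split. lia. unfold root. f_equal.
    rewrite INR_IZR_INZ, Z2Nat.id by auto. rewrite <- Hk. field. lra.
Qed.
Section Group.
Variable G : CompactAbGroup.

Lemma g0l (x : G) : gadd gzero x = x.
Proof. rewrite gaddC; apply gadd0. Qed.
Lemma gcancel (x y z : G) : gadd x y = gadd x z -> y = z.
Proof.
  intros H. rewrite <- (g0l y), <- (g0l z), <- (gaddN G x), (gaddC G x).
  rewrite <- !gaddA, H. reflexivity.
Qed.
Lemma gnmul_plus a b (x : G) : gnmul (a + b) x = gadd (gnmul a x) (gnmul b x).
Proof. induction a; simpl. now rewrite g0l. rewrite IHa, gaddA; auto. Qed.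
Lemma gnmul_mult a b (x : G) : gnmul (a * b) x = gnmul a (gnmul b x).
Proof. induction a; simpl; auto. rewrite gnmul_plus, IHa; auto. Qed.
Lemma gnmul_zero n : gnmul n (@gzero G) = gzero.
Proof. induction n; simpl; auto. rewrite IHn; apply gadd0. Qed.
Lemma gnmul_add n (x y : G) : gnmul n (gadd x y) = gadd (gnmul n x) (gnmul n y).
Proof.
  induction n; simpl. now rewrite gadd0. rewrite IHn.
  rewrite !gaddA. f_equal. rewrite <- !gaddA. f_equal. apply gaddC.
Qed.

Lemma gopen_ext (U V : G -> Prop) : (forall x, U x <-> V x) -> gopen G U -> gopen G V.
Proof.
  intros H HU. replace V with U; auto.
  apply functional_extensionality; intros x; apply propositional_extensionality; auto.
Qed.
Lemma gopen_empty : gopen G (fun _ => False).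
Proof.
  apply gopen_ext with (fun x => exists i : False, (fun (i:False) (_:G) => True) i x).
  - intros x; split; [intros [[] _]|intros []].
  - apply gopen_union. intros [].
Qed.
Lemma gopen_const (P : Prop) : gopen G (fun _ => P).
Proof.
  destruct (classic P).
  - apply gopen_ext with (fun _ => True); [tauto|apply gopen_full].
  - apply gopen_ext with (fun _ => False); [tauto|apply gopen_empty].
Qed.
Lemma gopen_local (S : G -> Prop) :
  (forall x, S x -> exists U, gopen G U /\ U x /\ forall y, U y -> S y) -> gopen G S.
Proof.
  intros H.
  assert (Hc : forall i : {x | S x}, exists U, gopen G U /\ U (proj1_sig i) /\ forall y, U y -> S y).
  { intros [x Hx]; apply H; auto. }
  destruct (choice _ Hc) as [f Hf].
  apply gopen_ext with (fun x => exists i, f i x).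
  - intros x; split.
    + intros [i Hi]. destruct (Hf i) as [_ [_ Hs]]. auto.
    + intros Hx. exists (exist _ x Hx). apply (Hf (exist _ x Hx)).
  - apply gopen_union. intros i; apply (Hf i).
Qed.
Lemma gopen_inter_list (I : Type) (l : list I) (U : I -> G -> Prop) :
  (forall i, gopen G (U i)) -> gopen G (fun x => forall i, In i l -> U i x).
Proof.
  intros HU. induction l as [|a l IH].
  - apply gopen_ext with (fun _ => True); [simpl; tauto|apply gopen_full].
  - apply gopen_ext with (fun x => U a x /\ (forall i, In i l -> U i x)).
    + intros x; simpl; split. intros [A B] i [->|Hi]; auto. intros Hx; split; auto.
    + apply gopen_inter; auto.
Qed.
Lemma gopen_transl (V : G -> Prop) (c : G) : gopen G V -> gopen G (fun x => V (gadd x c)).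
Proof.
  intros HV. apply gopen_local. intros x Hx.
  destruct (gadd_cont G x c V HV Hx) as [U [W [HU [HW [Ux [Wc Huv]]]]]].
  exists U; split; auto.
Qed.
Definition gcont (f : G -> G) := forall V, gopen G V -> gopen G (fun x => V (f x)).
Lemma gcont_add f g : gcont f -> gcont g -> gcont (fun x => gadd (f x) (g x)).
Proof.
  intros Hf Hg V HV. apply gopen_local. intros x Hx.
  destruct (gadd_cont G (f x) (g x) V HV Hx) as [U [W [HU [HW [Ux [Wc Huv]]]]]].
  exists (fun y => U (f y) /\ W (g y)). split; [|split; auto].
  - apply gopen_inter; auto.
  - intros y [A B]; auto.
Qed.
Lemma gcont_nmul n : gcont (gnmul n).
Proof.
  induction n; intros V HV; simpl.
  - apply gopen_const.
  - apply (gcont_add (fun x => x) (gnmul n)); auto. intros W HW; exact HW.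
Qed.
Lemma gopen_neq (c : G) : gopen G (fun x => x <> c).
Proof.
  apply gopen_local. intros x Hx.
  destruct (ghausdorff G x c Hx) as [U [V [HU [HV [Ux [Vc Hd]]]]]].
  exists U; split; [|split]; auto. intros y Uy ->. apply (Hd c); auto.
Qed.
Lemma regular (p : G) (W : G -> Prop) : gopen G W -> W p ->
  exists V O, gopen G V /\ gopen G O /\ V p /\ (forall x, V x -> ~ O x) /\ (forall x, ~ O x -> W x).
Proof.
  intros HW Wp.
  assert (Hs : forall q : {q | ~ W q}, exists AB : (G -> Prop) * (G -> Prop),
    gopen G (fst AB) /\ gopen G (snd AB) /\ fst AB p /\ snd AB (proj1_sig q) /\
    forall z, ~ (fst AB z /\ snd AB z)).
  { intros [q Hq]. assert (p <> q) by (intros ->; auto).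
    destruct (ghausdorff G p q H) as [A [B HAB]]. exists (A, B); simpl; tauto. }
  destruct (choice _ Hs) as [f Hf].
  set (Uc := fun (i : option {q | ~ W q}) => match i with None => W | Some q => snd (f q) end).
  destruct (gcompact G _ Uc) as [l Hl].
  { intros [q|]; simpl; auto. apply (Hf q). }
  { intros x. destruct (classic (W x)). exists None; auto.
    exists (Some (exist _ x H)). simpl. apply (Hf (exist _ x H)). }
  set (Vi := fun (i : option {q | ~ W q}) => match i with None => fun _ : G => True | Some q => fst (f q) end).
  set (Oi := fun (i : option {q | ~ W q}) => match i with None => fun _ : G => False | Some q => snd (f q) end).
  exists (fun x => forall i, In i l -> Vi i x), (fun x => exists i, In i l /\ Oi i x).
  split; [|split; [|split; [|split]]].
  - apply gopen_inter_list. intros [q|]; simpl. apply (Hf q). apply gopen_full.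
  - apply gopen_union. intros i. apply gopen_inter. apply gopen_const.
    destruct i as [q|]; simpl. apply (Hf q). apply gopen_const.
  - intros [q|] _; simpl; auto. apply (Hf q).
  - intros x HV [[q|] [Hi Ho]]; simpl in Ho; auto.
    specialize (HV _ Hi); simpl in HV. destruct (Hf q) as [_ [_ [_ [_ Hd]]]]. apply (Hd x); auto.
  - intros x HO. destruct (Hl x) as [[q|] [Hi Hx]]; simpl in Hx; auto.
    exfalso; apply HO. exists (Some q); simpl; auto.
Qed.

Definition Fn (n : nat) (x : G) : Prop := gnmul (fact n) x = gzero.

Definition OS := {W : G -> Prop | gopen G W /\ exists x, W x}.

Lemma baire_contra : (forall n (U : G -> Prop), gopen G U -> (exists x, U x) -> exists x, U x /\ ~ Fn n x) ->
  torsion G -> False.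
Proof.
  intros Hno HT.
  assert (Hstep : forall n (W : OS), exists VO : OS * (G -> Prop),
     gopen G (snd VO) /\ (forall x, proj1_sig (fst VO) x -> ~ snd VO x) /\
     (forall x, ~ snd VO x -> proj1_sig W x /\ ~ Fn n x)).
  { intros n [W [HW HWne]]. destruct (Hno n (fun x => W x /\ ~ Fn n x)) as [p [[Wp Fp] _]].
    - apply gopen_inter; auto. apply (gcont_nmul (fact n) (fun y => y <> gzero)). apply gopen_neq.
    - destruct HWne as [x Wx]. destruct (Hno n W HW (ex_intro _ x Wx)) as [y Hy]. exists y; auto.
    - destruct (regular p (fun x => W x /\ ~ Fn n x)) as [V [O [HV [HO [Vp [HVO HOW]]]]]].
      + apply gopen_inter; auto. apply (gcont_nmul (fact n) (fun y => y <> gzero)). apply gopen_neq.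
      + split; auto.
      + exists (exist _ V (conj HV (ex_intro _ p Vp)), O). simpl. split; auto. }
  destruct (choice (fun (nW : nat * OS) (VO : OS * (G -> Prop)) =>
     gopen G (snd VO) /\ (forall x, proj1_sig (fst VO) x -> ~ snd VO x) /\
     (forall x, ~ snd VO x -> proj1_sig (snd nW) x /\ ~ Fn (fst nW) x))
     (fun nW => Hstep (fst nW) (snd nW))) as [st Hst].
  pose (W0 := exist (fun W : G -> Prop => gopen G W /\ exists x, W x) (fun _ => True)
                (conj (gopen_full G) (ex_intro _ gzero I))).
  pose (sq := fix sq (n : nat) : OS := match n with 0 => W0 | S m => fst (st (m, sq m)) end).
  pose (O := fun n => snd (st (n, sq n))).
  assert (Ha : forall n x, proj1_sig (sq (S n)) x -> ~ O n x).
  { intros n x H. apply (Hst (n, sq n)). exact H. }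
  assert (Hb : forall n x, ~ O n x -> proj1_sig (sq n) x /\ ~ Fn n x).
  { intros n x H. apply (Hst (n, sq n)). exact H. }
  assert (Hc : forall n m x, (n <= m)%nat -> ~ O m x -> ~ O n x).
  { intros n m x Hnm. induction Hnm; auto. intros H. apply IHHnm. apply Ha. apply Hb, H. }
  destruct (gcompact G nat O) as [l Hl].
  { intros n. apply (Hst (n, sq n)). }
  { intros x. apply NNPP. intros Hx.
    destruct (HT x) as [k [Hk Hkx]].
    assert (Fn k x).
    { unfold Fn. destruct k. lia. change (fact (S k)) with (S k * fact k)%nat. rewrite Nat.mul_comm, gnmul_mult.
      rewrite Hkx. apply gnmul_zero. }
    apply (Hb k x); auto. intros HO; apply Hx; exists k; auto. }
  set (N := fold_right max 0%nat l).
  assert (HN : forall n, In n l -> (n <= N)%nat).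
  { unfold N; clear. induction l; simpl; intros n H. contradiction. destruct H as [->|H]. lia. specialize (IHl n H). lia. }
  destruct (proj2 (proj2_sig (sq (S N)))) as [y Hy].
  destruct (Hl y) as [n [Hn Hny]].
  apply (Hc n N y (HN n Hn)); auto.
Qed.
Lemma prod_list_div (l : list G) (ord : G -> nat) g : In g l ->
  exists q, fold_right (fun g acc => (ord g * acc)%nat) 1%nat l = (q * ord g)%nat.
Proof.
  induction l as [|a l IH]; simpl. contradiction. intros [->|H].
  - exists (fold_right (fun g acc => (ord g * acc)%nat) 1%nat l). lia.
  - destruct (IH H) as [q Hq]. rewrite Hq. exists (ord a * q)%nat. lia.
Qed.
Lemma prod_list_pos (l : list G) (ord : G -> nat) : (forall g, ord g > 0)%nat ->
  (fold_right (fun g acc => (ord g * acc)%nat) 1%nat l > 0)%nat.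
Proof.
  intros H. induction l; simpl. lia. specialize (H a). nia.
Qed.

Lemma bounded_exp : torsion G -> exists M, (M > 0)%nat /\ forall x : G, gnmul M x = gzero.
Proof.
  intros HT.
  assert (HU : exists n (U : G -> Prop), gopen G U /\ (exists x, U x) /\ forall x, U x -> Fn n x).
  { apply NNPP. intros Hn. apply (baire_contra); auto. intros n U HU [x Ux].
    apply NNPP. intros Hc. apply Hn. exists n, U. split; auto. split. exists x; auto.
    intros y Uy. apply NNPP. intros Hy. apply Hc. exists y; auto. }
  destruct HU as [n [U [HU [[u Uu] HUF]]]].
  destruct (choice _ HT) as [ord Hord].
  destruct (gcompact G G (fun g x => U (gadd (gadd x (gopp G g)) u))) as [l Hl].
  { intros g. apply (gopen_transl (fun y => U (gadd y u))). apply gopen_transl; auto. }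
  { intros x. exists x. rewrite gaddN, g0l. auto. }
  set (P := fold_right (fun g acc => (ord g * acc)%nat) 1%nat l).
  exists (P * fact n)%nat. split.
  { pose proof (prod_list_pos l ord (fun g => proj1 (Hord g))). pose proof (lt_O_fact n). unfold P; nia. }
  intros x. destruct (Hl x) as [g [Hg Hx]].
  set (v := gadd x (gopp G g)) in Hx.
  assert (Hv : gnmul (fact n) v = gzero).
  { pose proof (HUF _ Hx) as H1. pose proof (HUF _ Uu) as H2. unfold Fn in *.
    rewrite gnmul_add, H2, gadd0 in H1. auto. }
  assert (Hxv : x = gadd v g).
  { unfold v. rewrite <- gaddA, (gaddC G (gopp G g)), gaddN, gadd0. auto. }
  rewrite Hxv, gnmul_add. rewrite gnmul_mult, Hv, gnmul_zero, g0l.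
  destruct (prod_list_div l ord g Hg) as [q Hq]. fold P in Hq. rewrite Hq.
  replace (q * ord g * fact n)%nat with (q * fact n * ord g)%nat by lia.
  rewrite gnmul_mult. rewrite (proj2 (Hord g)). apply gnmul_zero.
Qed.
Lemma chi0 (g : character G) : g gzero = C1.
Proof.
  pose proof (chi_hom G g gzero gzero) as H. rewrite gadd0 in H.
  pose proof (Cmul_conj_r _ (chi_unit G g gzero)) as Hc.
  set (z := g gzero) in *.
  transitivity (Cmul (Cmul z z) (Cconj z)).
  - rewrite <- Cmul_assoc, Hc, Cmul_1_r. reflexivity.
  - rewrite <- H. exact Hc.
Qed.
Lemma chi_nmul (g : character G) n x : g (gnmul n x) = Cpow (g x) n.
Proof. induction n; simpl. apply chi0. rewrite chi_hom, IHn; auto. Qed.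

End Group.

Definition dist (z w : C) : R := dist_euc (fst z) (snd z) (fst w) (snd w).

Lemma C_open_ball c r : C_open (fun w => dist w c < r).
Proof.
  intros z Hz. exists (Rsqr (r - dist z c)). split.
  - apply Rsqr_pos_lt. lra.
  - intros w Hw. pose proof (triangle (fst w) (snd w) (fst c) (snd c) (fst z) (snd z)).
    unfold dist in *.
    assert (dist_euc (fst w) (snd w) (fst z) (snd z) < r - dist_euc (fst z) (snd z) (fst c) (snd c)).
    { unfold dist_euc at 1. rewrite <- (sqrt_Rsqr (r - _)) by lra.
      apply sqrt_lt_1_alt. split. apply Rplus_le_le_0_compat; apply Rle_0_sqr.
      unfold Cnorm2 in Hw; simpl in Hw. unfold Rsqr at 1 2; lra. }
    lra.
Qed.

Lemma C_open_nbhd V z : C_open V -> V z -> exists r, 0 < r /\ forall w, dist w z < r -> V w.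
Proof.
  intros HV Vz. destruct (HV z Vz) as [eps [He Hw]].
  exists (sqrt eps). split. apply sqrt_lt_R0; auto.
  intros w Hd. apply Hw. unfold dist, dist_euc in Hd. apply sqrt_lt_0_alt in Hd.
  unfold Cnorm2, Rsqr in *; simpl; lra.
Qed.

Lemma C_open_neq c : C_open (fun w => w <> c).
Proof.
  intros z Hz. exists (Cnorm2 (fst z - fst c, snd z - snd c)). split.
  - destruct z as [a b], c as [a' b']. unfold Cnorm2; simpl.
    assert (a <> a' \/ b <> b') by (destruct (Req_dec a a'); destruct (Req_dec b b'); subst; auto).
    destruct H. assert (a - a' <> 0) by lra. pose proof (Rsqr_pos_lt _ H0). unfold Rsqr in H1.
    pose proof (Rle_0_sqr (b - b')); unfold Rsqr in H2; lra.
    assert (b - b' <> 0) by lra. pose proof (Rsqr_pos_lt _ H0). unfold Rsqr in H1.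
    pose proof (Rle_0_sqr (a - a')); unfold Rsqr in H2; lra.
  - intros w Hw ->. unfold Cnorm2 in Hw; simpl in Hw. lra.
Qed.

Lemma dist_mul_l a b c : Cnorm2 a = 1 -> dist (Cmul a b) (Cmul a c) = dist b c.
Proof.
  intros H. unfold dist, dist_euc. f_equal. destruct a as [a1 a2], b, c.
  unfold Cnorm2 in H; unfold Cmul, Rsqr; simpl in *.
  transitivity ((a1 * a1 + a2 * a2) * ((r - r1) * (r - r1) + (r0 - r2) * (r0 - r2))). ring.
  rewrite H; ring.
Qed.
Lemma dist_mul a b a0 b0 : Cnorm2 a = 1 -> Cnorm2 b0 = 1 ->
  dist (Cmul a b) (Cmul a0 b0) <= dist a a0 + dist b b0.
Proof.
  intros Ha Hb.
  pose proof (triangle (fst (Cmul a b)) (snd (Cmul a b)) (fst (Cmul a0 b0)) (snd (Cmul a0 b0))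
    (fst (Cmul a b0)) (snd (Cmul a b0))).
  fold (dist (Cmul a b) (Cmul a0 b0)) (dist (Cmul a b) (Cmul a b0)) (dist (Cmul a b0) (Cmul a0 b0)) in H.
  rewrite (dist_mul_l a b b0 Ha) in H.
  assert (E1 : dist (Cmul a b0) (Cmul a0 b0) = dist a a0).
  { rewrite (Cmul_comm a b0), (Cmul_comm a0 b0). apply dist_mul_l; auto. }
  rewrite E1 in H. lra.
Qed.

Section Chars.
Variable G : CompactAbGroup.

Definition char_one : character G.
Proof.
  refine {| chi := fun _ => C1 |}.
  - intros; rewrite Cmul_1_l; auto.
  - intros; unfold Cnorm2, C1; simpl; ring.
  - intros V HV. apply gopen_const.
Defined.

Definition char_mul (a b : character G) : character G.
Proof.
  refine {| chi := fun x => Cmul (a x) (b x) |}.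
  - intros x y. rewrite !chi_hom. rewrite !Cmul_assoc. f_equal.
    rewrite <- !Cmul_assoc. f_equal. apply Cmul_comm.
  - intros x. rewrite Cnorm2_mul, !chi_unit. ring.
  - intros V HV. apply gopen_local. intros x Hx.
    destruct (C_open_nbhd V _ HV Hx) as [r [Hr Hw]].
    exists (fun y => dist (a y) (a x) < r / 2 /\ dist (b y) (b x) < r / 2). split; [|split].
    + apply gopen_inter.
      * apply (chi_cont G a (fun w => dist w (a x) < r/2)); apply C_open_ball.
      * apply (chi_cont G b (fun w => dist w (b x) < r/2)); apply C_open_ball.
    + unfold dist; rewrite !distance_refl; lra.
    + intros y [A B]. apply Hw. eapply Rle_lt_trans. apply dist_mul; apply chi_unit. lra.
Defined.

Fixpoint char_pow (a : character G) (n : nat) : character G :=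
  match n with O => char_one | S m => char_mul a (char_pow a m) end.

Lemma char_pow_val a n x : char_pow a n x = Cpow (a x) n.
Proof. induction n; simpl; auto. rewrite <- IHn. reflexivity. Qed.
Lemma char_mul_val a b x : char_mul a b x = Cmul (a x) (b x).
Proof. reflexivity. Qed.
Lemma char_one_val x : char_one x = C1.
Proof. reflexivity. Qed.

End Chars.
Lemma min_exists (P : nat -> Prop) n : P n -> exists m, P m /\ forall k, P k -> (m <= k)%nat.
Proof.
  induction n as [n IH] using (well_founded_induction lt_wf).
  intros Pn. destruct (classic (exists k, (k < n)%nat /\ P k)) as [[k [Hk Pk]]|Hno].
  - apply (IH k Hk Pk).
  - exists n. split; auto. intros k Pk. destruct (Nat.le_gt_cases n k); auto.
    exfalso; apply Hno; eauto.
Qed.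

Section Cyclic.
Variable M : nat.
Hypothesis HM0 : (M > 0)%nat.

Lemma root_pow_gen g t : Cpow (root M g) t = root M (t * g).
Proof. apply root_pow; auto. Qed.

Lemma cyclic (Z : C -> Prop) : Z C1 -> (forall a b, Z a -> Z b -> Z (Cmul a b)) ->
  (forall z, Z z -> exists j, z = root M j) ->
  exists g e, (0 < g)%nat /\ (g * e = M)%nat /\ Z (root M g) /\
     forall z, Z z -> exists t, z = Cpow (root M g) t.
Proof.
  intros Z1 Zm Zr.
  assert (Zp : forall a n, Z a -> Z (Cpow a n)).
  { intros a n Za; induction n; simpl; auto. }
  assert (PM : (0 < M)%nat /\ Z (root M M)).
  { split; auto. replace M with (1 * M)%nat at 2 by lia. rewrite root_multiple; auto. }
  destruct (min_exists (fun j => (0 < j)%nat /\ Z (root M j)) M PM) as [g [[Hg Zg] Hmin]].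
  assert (Hdiv : forall h, Z (root M h) -> (h mod g = 0)%nat).
  { intros h Zh. set (q := (h / g)%nat). set (r := (h mod g)%nat).
    assert (Hh : h = (g * q + r)%nat) by (apply Nat.div_mod_eq).
    assert (Hr : (r < g)%nat) by (apply Nat.mod_upper_bound; lia).
    assert (Zr' : Z (root M r)).
    { assert (E1 : root M r = Cmul (root M h) (Cpow (root M g) (q * (M - 1)))).
      { rewrite root_pow_gen, root_mul by auto.
        replace (h + q * (M - 1) * g)%nat with (r + (q * g) * M)%nat by (rewrite Hh; destruct M; [lia|]; simpl; nia).
        rewrite <- root_mul, root_multiple, Cmul_1_r; auto. }
      rewrite E1. apply Zm; auto. }
    destruct (Nat.eq_dec r 0); auto. exfalso.
    assert (Hr0 : (0 < r)%nat) by lia. specialize (Hmin r (conj Hr0 Zr')). lia. }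
  exists g, (M / g)%nat. split; [auto|split; [|split; auto]].
  - pose proof (Hdiv M (proj2 PM)). pose proof (Nat.div_mod_eq M g). lia.
  - intros z Hz. destruct (Zr z Hz) as [j ->].
    pose proof (Hdiv j Hz). pose proof (Nat.div_mod_eq j g).
    exists (j / g)%nat. rewrite root_pow_gen. f_equal. lia.
Qed.

Lemma pow_gen g e w : (0 < g)%nat -> (g * e = M)%nat -> Cnorm2 w = 1 -> Cpow w e = C1 ->
  exists c, w = Cpow (root M g) c.
Proof.
  intros Hg Hge Hw He.
  assert (HwM : Cpow w M = C1) by (rewrite <- Hge, Cpow_mul, He, Cpow_C1; auto).
  destruct (root_repr M w HM0 Hw HwM) as [h [Hh ->]].
  rewrite root_pow in He by auto. apply root_one_iff in He; auto.
  assert (He0 : (e > 0)%nat) by (destruct e; lia).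
  pose proof (Nat.div_mod_eq (e * h) M). rewrite He in H.
  set (k := ((e * h) / M)%nat) in H.
  exists k. rewrite root_pow_gen. f_equal.
  rewrite <- Hge in H. 
  assert (e * h = e * (k * g))%nat by nia.
  apply Nat.mul_cancel_l in H0; lia.
Qed.

End Cyclic.
Lemma Cpow_pow z a b : Cpow (Cpow z a) b = Cpow z (b * a).
Proof. rewrite Cpow_mul; auto. Qed.

Section Core.
Variable G : CompactAbGroup.
Variable M : nat.
Hypothesis HM0 : (M > 0)%nat.
Hypothesis HMx : forall x : G, gnmul M x = gzero.

Lemma chi_powM (g : character G) x : Cpow (g x) M = C1.
Proof. rewrite <- chi_nmul, HMx. apply chi0. Qed.
Lemma chi_root (g : character G) x : exists j, g x = root M j.
Proof.
  destruct (root_repr M (g x) HM0 (chi_unit G g x) (chi_powM g x)) as [j [_ H]]. eauto.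
Qed.
Lemma root_M_one g : Cpow (root M g) M = C1.
Proof. rewrite root_pow by auto. rewrite Nat.mul_comm. apply root_multiple; auto. Qed.

Lemma S_nmul (S : G -> Prop) : S gzero -> (forall x y, S x -> S y -> S (gadd x y)) ->
  forall n x, S x -> S (gnmul n x).
Proof. intros S0 Sa n x Sx; induction n; simpl; auto. Qed.

Lemma factor (S : G -> Prop) (eta Phi : character G) : S gzero ->
  (forall x y, S x -> S y -> S (gadd x y)) ->
  (forall x, S x -> eta x = C1 -> Phi x = C1) ->
  exists k, forall x, S x -> Cmul (Cpow (eta x) k) (Phi x) = C1.
Proof.
  intros S0 Sa HP.
  destruct (cyclic M HM0 (fun z => exists x, S x /\ eta x = z)) as [g [e [Hg [Hge [[x0 [Sx0 Hx0]] Hgen]]]]].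
  - exists gzero; split; auto. apply chi0.
  - intros a b [x [Sx <-]] [y [Sy <-]]. exists (gadd x y); split; auto. apply chi_hom.
  - intros z [x [_ <-]]. apply chi_root.
  - set (zeta := root M g) in *.
    assert (Hze : Cpow zeta e = C1).
    { unfold zeta. rewrite root_pow by auto. rewrite Nat.mul_comm, Hge.
      replace M with (1 * M)%nat at 2 by lia. apply root_multiple; auto. }
    assert (HPe : Cpow (Phi x0) e = C1).
    { rewrite <- chi_nmul. apply HP. apply S_nmul; auto. rewrite chi_nmul, Hx0; auto. }
    destruct (pow_gen M HM0 g e (Phi x0) Hg Hge (chi_unit G Phi x0) HPe) as [c Hc].
    fold zeta in Hc.
    exists ((M - 1) * c)%nat. intros x Sx.
    destruct (Hgen (eta x) (ex_intro _ x (conj Sx eq_refl))) as [t Ht]. fold zeta in Ht.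
    set (y := gadd x (gnmul ((M - 1) * t) x0)).
    assert (Sy : S y) by (apply Sa; auto; apply S_nmul; auto).
    assert (Hy : eta y = C1).
    { unfold y. rewrite chi_hom, chi_nmul, Ht, Hx0. fold zeta. rewrite <- Cpow_add.
      replace (t + (M - 1) * t)%nat with (t * M)%nat by (destruct M; [lia|]; simpl; nia).
      rewrite Cpow_mul. unfold zeta. rewrite root_M_one, Cpow_C1. auto. }
    pose proof (HP y Sy Hy) as HPy. unfold y in HPy.
    rewrite chi_hom, chi_nmul, Hc, Cpow_pow in HPy.
    rewrite Ht, !Cpow_pow. rewrite Cmul_comm.
    replace ((M - 1) * c * t)%nat with ((M - 1) * t * c)%nat by lia. exact HPy.
Qed.
Inductive InSpan : list (character G) -> (G -> C) -> Prop :=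
 | sp_nil : InSpan nil (fun _ => C1)
 | sp_cons eta l psi k : InSpan l psi -> InSpan (eta :: l) (fun x => Cmul (Cpow (eta x) k) (psi x)).

Lemma H_ext (H : character G -> Prop) : dual_subgroup H ->
  forall a b : character G, H a -> (forall x, b x = a x) -> H b.
Proof.
  intros [H1 [Hm _]] a b Ha Hb. apply (Hm a (char_one G) b); auto.
  - apply H1. intros x; reflexivity.
  - intros x. rewrite Hb. simpl. rewrite Cmul_1_r; auto.
Qed.
Lemma H_one (H : character G -> Prop) : dual_subgroup H -> H (char_one G).
Proof. intros [H1 _]. apply H1. intros x; reflexivity. Qed.
Lemma H_mul (H : character G -> Prop) : dual_subgroup H ->
  forall a b, H a -> H b -> H (char_mul G a b).
Proof. intros [_ [Hm _]] a b Ha Hb. apply (Hm a b); auto. intros x; reflexivity. Qed.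
Lemma H_pow (H : character G -> Prop) : dual_subgroup H ->
  forall a n, H a -> H (char_pow G a n).
Proof. intros HH a n Ha. induction n; simpl. apply H_one; auto. apply H_mul; auto. Qed.

Lemma span_char l psi : InSpan l psi -> exists r : character G, (forall x, r x = psi x) /\
  forall H, dual_subgroup H -> (forall eta, In eta l -> H eta) -> H r.
Proof.
  induction 1.
  - exists (char_one G). split. intros; reflexivity. intros; apply H_one; auto.
  - destruct IHInSpan as [r [Hr HrH]].
    exists (char_mul G (char_pow G eta k) r). split.
    + intros x. rewrite char_mul_val, char_pow_val, Hr. auto.
    + intros HH Hd Hin. apply H_mul; auto. apply H_pow; auto. apply Hin; simpl; auto.
      apply HrH; auto. intros e He; apply Hin; simpl; auto.
Qed.

Lemma Lfin l : forall (S : G -> Prop) (ch : character G) (w : C), S gzero ->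
  (forall x y, S x -> S y -> S (gadd x y)) -> Cnorm2 w = 1 ->
  (forall psi b, InSpan l psi -> (forall x, S x -> Cmul (psi x) (Cpow (ch x) b) = C1) -> Cpow w b = C1) ->
  exists x, S x /\ (forall eta, In eta l -> eta x = C1) /\ ch x = w.
Proof.
  induction l as [|eta l IH]; intros S ch w S0 Sa Hw Hyp.
  - destruct (cyclic M HM0 (fun z => exists x, S x /\ ch x = z)) as [g [e [Hg [Hge [[x0 [Sx0 Hx0]] Hgen]]]]].
    + exists gzero; split; auto. apply chi0.
    + intros a b [x [Sx <-]] [y [Sy <-]]. exists (gadd x y); split; auto. apply chi_hom.
    + intros z [x [_ <-]]. apply chi_root.
    + set (zeta := root M g) in *.
      assert (Hze : Cpow zeta e = C1).
      { unfold zeta. rewrite root_pow by auto. rewrite Nat.mul_comm, Hge.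
        replace M with (1 * M)%nat at 2 by lia. apply root_multiple; auto. }
      assert (Hwe : Cpow w e = C1).
      { apply (Hyp (fun _ => C1) e sp_nil). intros x Sx. rewrite Cmul_1_l.
        destruct (Hgen (ch x) (ex_intro _ x (conj Sx eq_refl))) as [t Ht]. fold zeta in Ht.
        rewrite Ht, Cpow_pow, Nat.mul_comm, <- Cpow_pow, Hze, Cpow_C1. auto. }
      destruct (pow_gen M HM0 g e w Hg Hge Hw Hwe) as [c Hc]. fold zeta in Hc.
      exists (gnmul c x0). split. apply S_nmul; auto. split. intros _ [].
      rewrite chi_nmul, Hx0, Hc. auto.
  - destruct (IH (fun x => S x /\ eta x = C1) ch w) as [x [[Sx Ex] [Hl Hx]]].
    + split; auto. apply chi0.
    + intros x y [Sx Ex] [Sy Ey]. split; auto. rewrite chi_hom, Ex, Ey, Cmul_1_l; auto.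
    + auto.
    + intros psi b Hsp Hrel.
      destruct (span_char l psi Hsp) as [r [Hr _]].
      destruct (factor S eta (char_mul G r (char_pow G ch b)) S0 Sa) as [k Hk].
      { intros x Sx Ex. rewrite char_mul_val, char_pow_val, Hr. apply Hrel; auto. }
      apply (Hyp (fun x => Cmul (Cpow (eta x) k) (psi x)) b (sp_cons eta l psi k Hsp)).
      intros x Sx. specialize (Hk x Sx). rewrite char_mul_val, char_pow_val, Hr in Hk.
      rewrite <- Cmul_assoc. exact Hk.
    + exists x. split; auto. split; auto. intros e [<-|He]; auto.
Qed.
Lemma annihilator (H : character G -> Prop) (HH : dual_subgroup H) (ch : character G) :
  ~ H ch -> exists x, (forall eta, H eta -> eta x = C1) /\ ch x <> C1.
Proof.
  intros Hn.
  assert (DM : (0 < M)%nat /\ H (char_pow G ch M)).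
  { split; auto. apply (H_ext H HH (char_one G)). apply H_one; auto.
    intros x; rewrite char_pow_val, chi_powM; auto. }
  destruct (min_exists (fun n => (0 < n)%nat /\ H (char_pow G ch n)) M DM) as [d [[Hd0 Hd] Hdmin]].
  assert (Hd1 : d <> 1%nat).
  { intros ->. apply Hn. apply (H_ext H HH (char_pow G ch 1)); auto.
    intros x. rewrite char_pow_val. simpl. rewrite Cmul_1_r; auto. }
  assert (Hdiv : forall b, H (char_pow G ch b) -> (b mod d = 0)%nat).
  { intros b Hb. set (q := (b / d)%nat). set (r := (b mod d)%nat).
    assert (Hbq : b = (d * q + r)%nat) by apply Nat.div_mod_eq.
    assert (Hr : (r < d)%nat) by (apply Nat.mod_upper_bound; lia).
    assert (Hrr : H (char_pow G ch r)).
    { apply (H_ext H HH (char_mul G (char_pow G ch b) (char_pow G (char_pow G ch d) (q * (M - 1))))).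
      - apply H_mul; auto. apply H_pow; auto.
      - intros x. rewrite char_mul_val, !char_pow_val, Cpow_pow, <- Cpow_add.
        replace (b + q * (M - 1) * d)%nat with (r + (q * d) * M)%nat
          by (rewrite Hbq; destruct M; [lia|]; simpl; nia).
        rewrite Cpow_add, Cpow_mul, chi_powM, Cpow_C1, Cmul_1_r. auto. }
    destruct (Nat.eq_dec r 0); auto. exfalso.
    assert (Hr0 : (0 < r)%nat) by lia. specialize (Hdmin r (conj Hr0 Hrr)). lia. }
  set (w := root d 1).
  assert (Hw1 : w <> C1).
  { unfold w. rewrite root_one_iff by lia. rewrite Nat.mod_small; lia. }
  assert (Hex : exists x, (forall eta, H eta -> eta x = C1) /\ ch x = w).
  { apply NNPP. intros Hno.
    set (Uc := fun (i : option {eta : character G | H eta}) => match i with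
        None => fun x => ch x <> w | Some s => fun x => proj1_sig s x <> C1 end).
    destruct (gcompact G _ Uc) as [l Hl].
    - intros [[eta Heta]|]; simpl.
      + apply (chi_cont G eta (fun z => z <> C1)). apply C_open_neq.
      + apply (chi_cont G ch (fun z => z <> w)). apply C_open_neq.
    - intros x. destruct (classic (ch x = w)) as [Hx|Hx].
      + destruct (classic (exists eta, H eta /\ eta x <> C1)) as [[eta [He Hex]]|Hne].
        * exists (Some (exist _ eta He)). simpl; auto.
        * exfalso. apply Hno. exists x. split; auto. intros eta He. apply NNPP; intros Hc; apply Hne; eauto.
      + exists None; simpl; auto.
    - set (etas := flat_map (fun i => match i with Some s => proj1_sig s :: nil | None => nil end) l).
      assert (Hetas : forall eta, In eta etas -> H eta).
      { intros eta Hin. apply in_flat_map in Hin. destruct Hin as [[[e He]|] [_ Hi]]; simpl in Hi.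
        destruct Hi as [<-|[]]; auto. contradiction. }
      destruct (Lfin etas (fun _ => True) ch w I (fun _ _ _ _ => I)) as [x [_ [Hx1 Hx2]]].
      + unfold w. apply root_norm.
      + intros psi b Hsp Hrel.
        destruct (span_char etas psi Hsp) as [r [Hr HrH]].
        specialize (HrH H HH Hetas).
        assert (Hb : H (char_pow G ch b)).
        { apply (H_ext H HH (char_pow G r (M - 1))). apply H_pow; auto.
          intros x. rewrite !char_pow_val, Hr.
          specialize (Hrel x I).
          transitivity (Cmul (Cpow (psi x) (M - 1)) (Cmul (psi x) (Cpow (ch x) b))).
          - rewrite Cmul_assoc. replace (Cmul (Cpow (psi x) (M - 1)) (psi x)) with (Cpow (psi x) M).
            + rewrite <- Hr, chi_powM, Cmul_1_l. auto.
            + replace M with (M - 1 + 1)%nat at 1 by lia. rewrite Cpow_add. simpl. rewrite Cmul_1_r. auto.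
          - rewrite Hrel, Cmul_1_r. auto. }
        specialize (Hdiv b Hb). unfold w. rewrite root_pow by lia. rewrite Nat.mul_1_r.
        apply root_one_iff; auto; lia.
      + destruct (Hl x) as [[[e He]|] [Hi Hx]]; simpl in Hx.
        * apply Hx. apply Hx1. unfold etas. apply in_flat_map. exists (Some (exist _ e He)). simpl; auto.
        * auto. }
  destruct Hex as [x [Hx1 Hx2]]. exists x. split; auto. rewrite Hx2; auto.
Qed.
Lemma Cmul_add_l a b c : Cmul (Cadd a b) c = Cadd (Cmul a c) (Cmul b c).
Proof. destruct a, b, c; unfold Cmul, Cadd; simpl; f_equal; ring. Qed.
Lemma Cconj_mul a b : Cconj (Cmul a b) = Cmul (Cconj a) (Cconj b).
Proof. destruct a, b; unfold Cmul, Cconj; simpl; f_equal; ring. Qed.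
Lemma Cconj_pow a n : Cconj (Cpow a n) = Cpow (Cconj a) n.
Proof. induction n; simpl. unfold Cconj, C1; simpl; f_equal; ring. rewrite Cconj_mul, IHn; auto. Qed.

Definition tp_mul (p q : list (G * C)) : list (G * C) :=
  flat_map (fun a => map (fun b => (gadd (fst a) (fst b), Cmul (snd a) (snd b))) q) p.

Lemma tp_app p q (g : character G) : trig_poly (p ++ q) g = Cadd (trig_poly p g) (trig_poly q g).
Proof.
  induction p; simpl. unfold Cadd, C0; destruct (trig_poly q g); simpl; f_equal; ring.
  unfold trig_poly in *. simpl. rewrite IHp, Cadd_assoc; auto.
Qed.
Lemma tp_scale x c q (g : character G) :
  trig_poly (map (fun b => (gadd x (fst b), Cmul c (snd b))) q) g = Cmul (Cmul c (g x)) (trig_poly q g).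
Proof.
  induction q as [|[y d] q IH]; simpl. rewrite Cmul_0_r; auto.
  unfold trig_poly in *; simpl. rewrite IH, Cmul_add_r. f_equal.
  rewrite chi_hom. rewrite !Cmul_assoc. f_equal. rewrite <- !Cmul_assoc. f_equal. apply Cmul_comm.
Qed.
Lemma tp_mul_val p q (g : character G) : trig_poly (tp_mul p q) g = Cmul (trig_poly p g) (trig_poly q g).
Proof.
  induction p as [|[x c] p IH]; simpl. rewrite Cmul_0_l; auto.
  unfold tp_mul in *. simpl. rewrite tp_app, IH, tp_scale. unfold trig_poly at 3. simpl.
  rewrite Cmul_add_l. auto.
Qed.
Definition tp_one : list (G * C) := (gzero, C1) :: nil.
Lemma tp_one_val (g : character G) : trig_poly tp_one g = C1.
Proof. unfold trig_poly, tp_one; simpl. rewrite chi0, Cmul_1_l, Cadd_0_r; auto. Qed.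

Definition gsumf (z : C) (l : list nat) : C := fold_right (fun k acc => Cadd (Cpow z k) acc) C0 l.

Lemma gsum_id z s n : Cadd (Cmul z (gsumf z (seq s n))) (Cpow z s) = Cadd (gsumf z (seq s n)) (Cpow z (s + n)).
Proof.
  revert s; induction n; intros s; simpl.
  - rewrite Cmul_0_r, Nat.add_0_r. destruct (Cpow z s); unfold Cadd, C0; simpl; f_equal; ring.
  - specialize (IHn (S s)). rewrite Cmul_add_r. replace (s + S n)%nat with (S s + n)%nat by lia.
    simpl Cpow in *. revert IHn.
    generalize (Cmul z (gsumf z (seq (S s) n))) (Cmul z (Cpow z s)) (Cpow z s) (gsumf z (seq (S s) n))
      (Cpow z (S s + n)).
    intros [a1 a2] [b1 b2] [c1 c2] [d1 d2] [e1 e2]. unfold Cadd; simpl. intros H; injection H as H1 H2.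
    f_equal; lra.
Qed.

Lemma gsum_zero z n : Cpow z n = C1 -> z <> C1 -> gsumf z (seq 0 n) = C0.
Proof.
  intros Hn Hz. pose proof (gsum_id z 0 n) as H. simpl in H. rewrite Hn in H.
  set (F := gsumf z (seq 0 n)) in *.
  apply (Cmul_integral (fst z - 1, snd z)).
  - destruct z as [z1 z2], F as [f1 f2]. unfold Cadd, Cmul, C1 in *; simpl in *.
    injection H as H1 H2. unfold C0. f_equal; nra.
  - intros Hc. apply Hz. destruct z as [z1 z2]. unfold C0, C1 in *. injection Hc as E1 E2. f_equal; lra.
Qed.
Lemma gsum_one n : gsumf C1 (seq 0 n) = (INR n, 0).
Proof.
  assert (forall s, gsumf C1 (seq s n) = (INR n, 0)).
  { induction n; intros s; simpl. reflexivity. rewrite IHn, Cpow_C1. unfold Cadd, C1; simpl.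
    f_equal. destruct n; simpl; ring. ring. }
  apply H.
Qed.
Lemma tp_ext p (a b : character G) : (forall x, In x (map fst p) -> a x = b x) ->
  trig_poly p a = trig_poly p b.
Proof.
  induction p as [|[x c] p IH]; simpl; intros Hx; auto.
  unfold trig_poly in *; simpl. rewrite IH, Hx; auto.
Qed.

Fixpoint tuples (n : nat) : list (list nat) :=
  match n with O => nil :: nil
  | S n => flat_map (fun t => map (fun j => j :: t) (seq 0 M)) (tuples n) end.
Lemma in_tuples t : (forall j, In j t -> (j < M)%nat) -> In t (tuples (length t)).
Proof.
  induction t as [|j t IH]; simpl; intros Hj; auto.
  apply in_flat_map. exists t. split. apply IH; auto.
  apply (in_map (fun j => j :: t)). apply in_seq. specialize (Hj j (or_introl eq_refl)). lia.
Qed.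
Lemma map_eq_in (A B : Type) (f g : A -> B) l x : map f l = map g l -> In x l -> f x = g x.
Proof.
  induction l; simpl. contradiction. intros H [<-|Hi]; injection H; auto.
Qed.

Lemma ubiq_spd (K : character G -> Prop) : ubiquitous K -> strictly_positive_definite K.
Proof.
  intros Hu p Hp g.
  set (xs := map fst p).
  set (HF := fun eta : character G => forall x, In x xs -> eta x = C1).
  assert (HHF : dual_subgroup HF).
  { split; [|split].
    - intros e He x _. apply He.
    - intros a b c Ha Hb Hc x Hx. rewrite Hc, Ha, Hb, Cmul_1_l; auto.
    - intros a b Ha Hb x Hx. rewrite Hb, (Ha x Hx). unfold Cconj, C1; simpl. f_equal; ring. }
  set (jfun := fun (d : character G) (x : G) =>
         epsilon (inhabits 0%nat) (fun j => d x = root M j /\ (j < M)%nat)).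
  assert (Hj : forall (d : character G) (x : G), d x = root M (jfun d x) /\ (jfun d x < M)%nat).
  { intros d x. unfold jfun. apply epsilon_spec.
    destruct (root_repr M (d x) HM0 (chi_unit G d x) (chi_powM d x)) as [j [Hj1 Hj2]]. eauto. }
  set (rep := fun t => epsilon (inhabits (char_one G)) (fun d => map (jfun d) xs = t)).
  assert (HFI : finite_index HF).
  { exists (map rep (tuples (length xs))). intros c.
    set (t := map (jfun c) xs).
    assert (Hrep : map (jfun (rep t)) xs = t) by (apply epsilon_spec; exists c; auto).
    assert (Hrc : forall x, In x xs -> rep t x = c x).
    { intros x Hx. rewrite (proj1 (Hj (rep t) x)), (proj1 (Hj c x)). f_equal.
      apply (map_eq_in _ _ _ _ xs); auto. }
    exists (rep t). split.
    - apply in_map. replace (length xs) with (length t) by (unfold t; apply length_map).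
      apply in_tuples. intros j Hjt. unfold t in Hjt. apply in_map_iff in Hjt.
      destruct Hjt as [x [<- _]]. apply Hj.
    - exists (char_mul G (char_pow G (rep t) (M - 1)) c). split.
      + intros x Hx. rewrite char_mul_val, char_pow_val, Hrc by auto.
        replace (Cmul (Cpow (c x) (M - 1)) (c x)) with (Cpow (c x) M). apply chi_powM.
        replace M with (M - 1 + 1)%nat at 1 by lia. rewrite Cpow_add; simpl; rewrite Cmul_1_r; auto.
      + intros x. rewrite char_mul_val, char_pow_val, Cmul_assoc.
        replace (Cmul (rep t x) (Cpow (rep t x) (M - 1))) with (Cpow (rep t x) M).
        rewrite chi_powM, Cmul_1_l; auto.
        replace M with (S (M - 1)) at 1 by lia. reflexivity. }
  destruct (Hu HF HHF HFI g) as [k [Kk [eta [Heta Hk]]]].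
  rewrite <- (Hp k Kk). apply tp_ext. intros x Hx.
  rewrite Hk, (Heta x Hx), Cmul_1_r. auto.
Qed.
Definition gp (g : character G) (x : G) : list (G * C) :=
  map (fun k => (gnmul k x, Cconj (g (gnmul k x)))) (seq 0 M).

Lemma gp_val (g psi : character G) x :
  trig_poly (gp g x) psi = gsumf (Cmul (Cconj (g x)) (psi x)) (seq 0 M).
Proof.
  unfold gp. generalize 0%nat. generalize M as n. induction n as [|n IH]; intros s; simpl; auto.
  unfold trig_poly in *; simpl. rewrite IH. f_equal.
  rewrite !chi_nmul, Cconj_pow, Cpow_Cmul. auto.
Qed.

Lemma P_val (g psi : character G) (pt : character G -> G) l :
  trig_poly (fold_right (fun d acc => tp_mul (gp g (pt d)) acc) tp_one l) psi =
  fold_right (fun d acc => Cmul (gsumf (Cmul (Cconj (g (pt d))) (psi (pt d))) (seq 0 M)) acc) C1 l.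
Proof.
  induction l; simpl. apply tp_one_val. rewrite tp_mul_val, gp_val, IHl; auto.
Qed.

Lemma fold_prod_zero (A : Type) (f : A -> C) l a : In a l -> f a = C0 ->
  fold_right (fun d acc => Cmul (f d) acc) C1 l = C0.
Proof.
  induction l; simpl. contradiction. intros [->|H] Hf.
  - rewrite Hf, Cmul_0_l; auto.
  - rewrite IHl, Cmul_0_r; auto.
Qed.
Lemma fold_prod_nz (A : Type) (f : A -> C) l : (forall a, In a l -> f a <> C0) ->
  fold_right (fun d acc => Cmul (f d) acc) C1 l <> C0.
Proof.
  induction l; simpl; intros H.
  - unfold C1, C0; intros E; injection E; lra.
  - intros E. apply Cmul_integral in E. revert E. apply IHl; auto. apply H; auto.
Qed.

Lemma spd_ubiq (K : character G -> Prop) : strictly_positive_definite K -> ubiquitous K.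
Proof.
  intros Hs H HH [reps Hreps] g. apply NNPP. intros Hno.
  assert (Hpt : forall d : character G, exists x : G, ~ in_coset g H d ->
             (forall eta, H eta -> eta x = C1) /\ d x <> g x).
  { intros d. destruct (classic (in_coset g H d)) as [Hc|Hc].
    - exists gzero; tauto.
    - set (ch := char_mul G d (char_pow G g (M - 1))).
      assert (Hch : ~ H ch).
      { intros Hch. apply Hc. exists ch. split; auto. intros x. unfold ch.
        rewrite !char_mul_val, char_pow_val, Cmul_assoc, (Cmul_comm (g x) (d x)), <- Cmul_assoc.
        replace (Cmul (g x) (Cpow (g x) (M - 1))) with (Cpow (g x) M).
        rewrite chi_powM, Cmul_1_r; auto.
        replace M with (S (M - 1)) at 1 by lia. reflexivity. }
      destruct (annihilator H HH ch Hch) as [x [Hx1 Hx2]]. exists x. intros _. split; auto.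
      intros E. apply Hx2. unfold ch. rewrite char_mul_val, char_pow_val, E.
      replace (Cmul (g x) (Cpow (g x) (M - 1))) with (Cpow (g x) M).
      apply chi_powM. replace M with (S (M - 1)) at 1 by lia. reflexivity. }
  destruct (choice _ Hpt) as [pt Hpt'].
  set (P := fold_right (fun d acc => tp_mul (gp g (pt d)) acc) tp_one reps).
  assert (Hzero : forall psi, K psi -> trig_poly P psi = C0).
  { intros psi Kpsi. unfold P. rewrite P_val.
    destruct (Hreps psi) as [d [Hd [eta [Heta Hpsi]]]].
    apply (fold_prod_zero _ (fun d => gsumf (Cmul (Cconj (g (pt d))) (psi (pt d))) (seq 0 M)) reps d Hd).
    assert (Hnc : ~ in_coset g H d).
    { intros [eta1 [Heta1 Hd1]]. apply Hno. exists psi. split; auto.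
      exists (char_mul G eta1 eta). split. apply H_mul; auto.
      intros x. rewrite Hpsi, Hd1, char_mul_val, Cmul_assoc. auto. }
    destruct (Hpt' d Hnc) as [Hann Hne].
    set (x := pt d) in *.
    apply gsum_zero.
    - rewrite Cpow_Cmul, <- Cconj_pow, !chi_powM. unfold Cconj, C1; simpl. rewrite Ropp_0, Cmul_1_l; auto.
    - intros E. apply Hne.
      assert (psi x = d x) by (rewrite Hpsi, (Hann eta Heta), Cmul_1_r; auto).
      rewrite <- H0. 
      transitivity (Cmul (Cmul (g x) (Cconj (g x))) (psi x)).
      + rewrite Cmul_conj_r, Cmul_1_l; auto. apply chi_unit.
      + rewrite <- Cmul_assoc, E, Cmul_1_r; auto. }
  assert (Hnz : trig_poly P g <> C0).
  { unfold P. rewrite P_val. apply fold_prod_nz. intros d _.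
    rewrite Cmul_comm, Cmul_conj_r by apply chi_unit. rewrite gsum_one.
    unfold C0; intros E; injection E as E1. pose proof (lt_0_INR M ltac:(lia)). lra. }
  apply Hnz. apply (Hs P Hzero g).
Qed.
End Core.

Theorem theorem2p8 (G : CompactAbGroup) (HG : torsion G)
    (K : character G -> Prop) :
  strictly_positive_definite K <-> ubiquitous K.
Proof.
  destruct (bounded_exp G HG) as [M [HM0 HMx]].
  split.
  - apply (spd_ubiq G M HM0 HMx).
  - apply (ubiq_spd G M HM0 HMx).
Qed.
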